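(* Let $n\in\mathbb N$ and let $K_{4n}$ be the complete graph on $4n$ vertices. The graph obtained from $K_{4n}$ by deleting a single edge $\{u,v\}$ exhibits Laplacian perfect state transfer between $u$ and $v$. More generally, if $F$ is any nonempty set of pairwise non-adjacent (vertex-disjoint) edges of $K_{4n}$, then the graph $K_{4n}-F$ exhibits Laplacian perfect state transfer at time $\pi/2$ between the two end vertices of every edge in $F$.
   Context: For a graph with Laplacian $L=D-A$ (degree matrix minus adjacency matrix), $U_L(t)=\exp(-itL)$. The graph exhibits Laplacian perfect state transfer between distinct vertices $u,v$ at time $\tau$ if $U_L(\tau)\mathbf e_u=\gamma\mathbf e_v$ for some $\gamma\in\mathbb C$, where $\mathbf e_u$ is the standard basis vector of $u$. *)

(* Defs.v *)
From mathcomp Require Import all_boot all_order all_algebra.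
From mathcomp Require Import all_classical all_reals all_analysis.
From mathcomp Require Import complex.
Import numFieldNormedType.Exports.
Import GRing.Theory Num.Theory.

Set Implicit Arguments.
Unset Strict Implicit.
Unset Printing Implicit Defensive.

Local Open Scope ring_scope.
Local Open Scope classical_set_scope.
Local Open Scope complex_scope.

(* The complex numbers over a real type R, viewed as a normed field
   (the regular module R[i]^o carries the norm topology). *)
Definition Cplx (R : realType) := ((R[i])^o)%type.

Definition expmx (R : realType) (N : nat) (A : 'M[Cplx R]_N) : 'M[Cplx R]_N :=
  lim ((fun m : nat => \sum_(k < m) (k`!%:R)^-1 *: A ^+ k) @ \oo).

(* A simple graph on the vertex set 'I_N is given by a relation adj,
   assumed symmetric and irreflexive where relevant.
   Degree matrix D, adjacency matrix A and Laplacian L = D - A. *)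
Definition adjmx (R : realType) (N : nat) (adj : rel 'I_N) : 'M[Cplx R]_N :=
  \matrix_(i, j) (adj i j)%:R.

Definition degmx (R : realType) (N : nat) (adj : rel 'I_N) : 'M[Cplx R]_N :=
  \matrix_(i, j) (if i == j then #|[set k | adj i k]%SET|%:R else 0).

Definition laplacian (R : realType) (N : nat) (adj : rel 'I_N) : 'M[Cplx R]_N :=
  degmx R adj - adjmx R adj.

Definition UL (R : realType) (N : nat) (adj : rel 'I_N) (t : R) : 'M[Cplx R]_N :=
  expmx (- ('i * t%:C) *: laplacian R adj).

Definition basis_vec (R : realType) (N : nat) (u : 'I_N) : 'cV[Cplx R]_N :=
  delta_mx u 0.

Definition lap_pst_at (R : realType) (N : nat) (adj : rel 'I_N)
    (u v : 'I_N) (tau : R) : Prop :=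
  u != v /\
  exists gamma : Cplx R, UL adj tau *m basis_vec R u = gamma *: basis_vec R v.

Definition lap_pst (R : realType) (N : nat) (adj : rel 'I_N) (u v : 'I_N) : Prop :=
  exists tau : R, lap_pst_at adj u v tau.

Definition complete_minus (N : nat) (F : {set {set 'I_N}}) : rel 'I_N :=
  fun x y => (x != y) && ([set x; y]%SET \notin F).

(* Main.v *)
Require Import Defs.
From mathcomp Require Import all_boot all_order all_algebra.
From mathcomp Require Import all_classical all_reals all_analysis.
From mathcomp Require Import complex.
Import numFieldNormedType.Exports.
Import GRing.Theory Num.Theory.
Local Open Scope ring_scope.
From mathcomp Require Import ring.

Section Aux.
Local Open Scope complex_scope.
Section S.
Local Open Scope classical_set_scope.
Variable R : realType.

Lemma normC_real (x : R) : `|(x%:C : R[i])| = (`|x|)%:C.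
Proof. by rewrite normc_def /= expr0n /= addr0 sqrtr_sqr. Qed.

Lemma cvgC (u : nat -> R) (l : R) : u n @[n --> \oo] --> l ->
  ((u n)%:C : Cplx R) @[n --> \oo] --> ((l%:C : R[i]) : Cplx R).
Proof.
move=> /cvgrPdist_lt H; apply/cvgrPdist_lt => e e0.
have := e0; rewrite ltcE /= => /andP[/eqP Ie Re0].
near=> m.
rewrite -rmorphB normC_real ltcE /= -Ie eqxx /=.
near: m; exact: H.
Unshelve. all: by end_near. Qed.
Lemma expi_term (t : R) k : (k`!%:R)^-1 * (-('i * t%:C)) ^+ k =
  (cos_coeff t k)%:C - 'i * (sin_coeff t k)%:C :> R[i].
Proof.
rewrite cos_coeffE sin_coeffE /= -mulNr exprMn.
have -> : (- 'i : R[i]) = - 'i by [].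
set j := k./2; rewrite -[k]odd_double_half; case: (odd k) => /=.
- rewrite ?add0n ?add1n /= ?odd_double /= ?uphalf_double ?half_double.
  rewrite exprS -mul2n exprM sqrrN sqr_i.
  rewrite !(rmorphM, rmorphXn, rmorphN, rmorph_nat, rmorph1, rmorph0, fmorphV).
  rewrite /= !(exprS, mul1r).
  ring.
- rewrite ?add0n ?add1n /= ?odd_double /= ?uphalf_double ?half_double.
  rewrite -mul2n exprM sqrrN sqr_i.
  rewrite !(rmorphM, rmorphXn, rmorphN, rmorph_nat, rmorph1, rmorph0, fmorphV).
  ring.
Qed.

Lemma cvg_cos_series (t : R) : series (cos_coeff t) n @[n --> \oo] --> cos t.
Proof. rewrite cos.unlock; exact: is_cvg_series_cos_coeff. Qed.
Lemma cvg_sin_series (t : R) : series (sin_coeff t) n @[n --> \oo] --> sin t.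
Proof. rewrite sin.unlock; exact: is_cvg_series_sin_coeff. Qed.

Lemma cvg_expi (t : R) :
  (\sum_(k < m) (k`!%:R)^-1 * (-('i * t%:C)) ^+ k : Cplx R) @[m --> \oo] -->
  (((cos t)%:C - 'i * (sin t)%:C : R[i]) : Cplx R).
Proof.
have E m : (\sum_(k < m) (k`!%:R)^-1 * (-('i * t%:C)) ^+ k : Cplx R) =
  ((series (cos_coeff t) m)%:C - 'i * (series (sin_coeff t) m)%:C : R[i]).
  rewrite !seriesEord /= (eq_bigr _ (fun (k : 'I_m) _ => expi_term t k)) sumrB -mulr_sumr.
  by rewrite !raddf_sum.
rewrite (funext E).
have A := cvgC _ _ (cvg_cos_series t).
have B := cvgC _ _ (cvg_sin_series t).
have I : (fun _ : nat => ('i : Cplx R)) @ \oo --> ('i : Cplx R) by apply: cvg_cst.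
have H := cvgB A (cvgM I B). exact: (H _ _).
Qed.
End S.

Section G.
Local Open Scope classical_set_scope.
Variable R : realType.
Local Notation C := (Cplx R).
Variable N : nat.
Variables P0 P1 P2 : 'M[C]_N.
Hypothesis h00 : P0 * P0 = P0.
Hypothesis h01 : P0 * P1 = 0.
Hypothesis h02 : P0 * P2 = 0.
Hypothesis h10 : P1 * P0 = 0.
Hypothesis h11 : P1 * P1 = P1.
Hypothesis h12 : P1 * P2 = 0.
Hypothesis h20 : P2 * P0 = 0.
Hypothesis h21 : P2 * P1 = 0.
Hypothesis h22 : P2 * P2 = P2.
Hypothesis hsum : P0 + P1 + P2 = 1.

Lemma sA (a b : C) (X Y : 'M[C]_N) : (a *: X) * (b *: Y) = (a * b) *: (X * Y).
Proof.
change ((a *: X) *m (b *: Y) = (a * b) *: (X *m Y)).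
by rewrite -scalemxAl -scalemxAr scalerA.
Qed.

Lemma pow_decomp (a b c : C) k :
  (a *: P0 + b *: P1 + c *: P2) ^+ k = a ^+ k *: P0 + b ^+ k *: P1 + c ^+ k *: P2.
Proof.
elim: k => [|k IH]; first by rewrite !expr0 !scale1r.
rewrite exprSr IH !mulrDl !mulrDr !sA.
rewrite h00 h01 h02 h10 h11 h12 h20 h21 h22 !scaler0 !(addr0, add0r).
by rewrite -!exprSr.
Qed.

Definition expsum (z : C) m := \sum_(k < m) (k`!%:R)^-1 * z ^+ k.

Lemma partial_decomp (a b c : C) m :
  \sum_(k < m) (k`!%:R)^-1 *: (a *: P0 + b *: P1 + c *: P2) ^+ k =
  expsum a m *: P0 + expsum b m *: P1 + expsum c m *: P2.
Proof.
rewrite /expsum !scaler_suml -!big_split /=; apply: eq_bigr => k _.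
by rewrite pow_decomp !scalerDr !scalerA.
Qed.

Lemma expmx_decomp (a b c ea eb ec : C) :
  expsum a m @[m --> \oo] --> ea ->
  expsum b m @[m --> \oo] --> eb ->
  expsum c m @[m --> \oo] --> ec ->
  expmx (a *: P0 + b *: P1 + c *: P2) = ea *: P0 + eb *: P1 + ec *: P2.
Proof.
move=> Ha Hb Hc; rewrite /expmx.
rewrite (funext (partial_decomp a b c)).
have HH : hausdorff_space 'M[C]_N by exact: norm_hausdorff.
apply: cvg_lim; first exact: HH.
apply/cvg_mx_entourageP => A entA.
have E : forall ij : 'I_N * 'I_N, \forall m \near \oo,
   ((ea *: P0 + eb *: P1 + ec *: P2) ij.1 ij.2,
    (expsum a m *: P0 + expsum b m *: P1 + expsum c m *: P2) ij.1 ij.2) \in A.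
  move=> [i j] /=.
  have Hij : (fun m => expsum a m * P0 i j + expsum b m * P1 i j + expsum c m * P2 i j)
     @ \oo --> (ea * P0 i j + eb * P1 i j + ec * P2 i j : C).
    apply: cvgD; first apply: cvgD.
    - exact: (cvgM Ha (cvg_cst _)).
    - exact: (cvgM Hb (cvg_cst _)).
    - exact: (cvgM Hc (cvg_cst _)).
  have X := (cvg_app_entourageP _ _ _).1 Hij.
have Y := X _ A entA.

near=> m. rewrite !mxE inE. near: m. exact: (Y _).
rewrite near_map.
apply: (@filterS nat \oo _ _ _ _ (filter_forall _ E)) => m /= H i j.
exact: (H (i, j)).
Unshelve. all: by end_near. Qed.
End G.

Lemma trig_per (R : realType) k :
  cos (pi *+ 2 *+ k : R) = 1 /\ sin (pi *+ 2 *+ k : R) = 0.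
Proof.
elim: k => [|k [hc hs]]; first by rewrite mulr0n cos0 sin0.
by rewrite mulrSr cosD2pi sinD2pi.
Qed.

Lemma ang1 (R : realType) n : (pi / 2 * (4 * n)%:R : R) = pi *+ 2 *+ n.
Proof. rewrite -mulrnA -mulr_natr !natrM; field; rewrite ?pnatr_eq0 //. Qed.

Lemma ang2 (R : realType) n : (0 < n)%N ->
  (pi / 2 * ((4 * n)%:R - 2) : R) = pi *+ 2 *+ n.-1 + pi.
Proof.
case: n => // n _ /=.
rewrite -mulrnA -mulr_natr -[n.+1]addn1 !natrM natrD; field; rewrite ?pnatr_eq0 //.
Qed.

Section EL.
Local Open Scope classical_set_scope.
Lemma esum_lim (R : realType) (t c : R) :
  @expsum R (-('i * t%:C) * c%:C) m @[m --> \oo] -->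
  (((cos (t * c))%:C - 'i * (sin (t * c))%:C : R[i]) : Cplx R).
Proof.
have -> : (-('i * t%:C) * c%:C : Cplx R) = -('i * (t * c)%:C).
  by rewrite rmorphM mulNr mulrA.
exact: cvg_expi.
Qed.
End EL.

Section Graph.
Variable R : realType.
Local Notation C := (Cplx R).
Variable N : nat.
Variable F : {set {set 'I_N}}.
Hypothesis Fcard : forall e, e \in F -> #|e| = 2%N.
Hypothesis Fdisj : forall e e', e \in F -> e' \in F -> e != e' -> [disjoint e & e'].

Definition pp (i k : 'I_N) := [set i; k]%SET \in F.

Lemma pp_sym i k : pp i k = pp k i.
Proof. by rewrite /pp finset.setUC. Qed.

Lemma pp_neq {i k} : pp i k -> i != k.
Proof. by move/Fcard; rewrite cards2; case: (i != k). Qed.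

Lemma pp_irr i : ~~ pp i i.
Proof. by apply/negP => /pp_neq; rewrite eqxx. Qed.

Lemma pp_uniq {i k k'} : pp i k -> pp i k' -> k = k'.
Proof.
move=> h1 h2; apply/eqP; apply/negPn/negP => neq.
have ne : [set i; k]%SET != [set i; k']%SET.
  apply/negP => /eqP E.
  have : k \in [set i; k']%SET by rewrite -E !inE eqxx orbT.
  rewrite !inE => /orP[/eqP ki|/eqP kk].
  - by move: (pp_neq h1); rewrite ki eqxx.
  - by rewrite kk eqxx in neq.
have := Fdisj _ _ h1 h2 ne; rewrite -setI_eq0 => /eqP H0.
have : i \in ([set i; k] :&: [set i; k'])%SET by rewrite !inE eqxx.
by rewrite H0 inE.
Qed.

Definition cnt i := #|[set k | pp i k]%SET|.

Lemma cnt_pp {i k} : pp i k -> cnt i = 1%N.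
Proof.
move=> h; rewrite /cnt (_ : [set k0 | pp i k0]%SET = [set k]%SET) ?cards1 //.
apply/setP => x; rewrite !inE; apply/idP/eqP => [hx|->//].
exact: pp_uniq hx h.
Qed.

Lemma cnt01 i : cnt i = 0%N \/ cnt i = 1%N.
Proof.
case: (pickP (pp i)) => [k hk|h0]; first by right; exact: cnt_pp hk.
left; rewrite /cnt; apply/eqP; rewrite cards_eq0; apply/eqP/setP => x.
by rewrite !inE h0.
Qed.

Lemma sum_pp i : \sum_k ((pp i k)%:R : C) = (cnt i)%:R.
Proof.
rewrite -natr_sum; congr (_%:R).
rewrite /cnt -sum1_card [RHS]big_mkcond /=.
by apply: eq_bigr => k _; rewrite inE; case: (pp i k).
Qed.

Lemma cnt_sq i : ((cnt i)%:R : C) * (cnt i)%:R = (cnt i)%:R.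
Proof. by case: (cnt01 i) => ->; rewrite ?mulr0 ?mulr1. Qed.

Lemma cnt_B i j : ((cnt i)%:R : C) * (pp i j)%:R = (pp i j)%:R.
Proof. by case h: (pp i j); rewrite ?mulr0 // (cnt_pp h) mulr1. Qed.

Lemma B_cnt i j : ((pp i j)%:R : C) * (cnt j)%:R = (pp i j)%:R.
Proof. by rewrite mulrC pp_sym cnt_B. Qed.

Definition Jm : 'M[C]_N := \matrix_(i, j) 1.
Definition Bm : 'M[C]_N := \matrix_(i, j) (pp i j)%:R.
Definition Dm : 'M[C]_N := diag_mx (\row_i (cnt i)%:R).
Definition Mm : 'M[C]_N := Dm - Bm.

Lemma JJ : Jm *m Jm = N%:R *: Jm.
Proof.
apply/matrixP => i j; rewrite !mxE.
under eq_bigr do rewrite !mxE mulr1.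
by rewrite sumr_const card_ord mulr1.
Qed.

Lemma JB : Jm *m Bm = Jm *m Dm.
Proof.
rewrite mul_mx_diag; apply/matrixP => i j; rewrite !mxE.
under eq_bigr do rewrite !mxE mul1r pp_sym.
by rewrite sum_pp mul1r.
Qed.

Lemma BJ : Bm *m Jm = Dm *m Jm.
Proof.
rewrite mul_diag_mx; apply/matrixP => i j; rewrite !mxE.
under eq_bigr do rewrite !mxE mulr1.
by rewrite sum_pp mulr1.
Qed.

Lemma BB : Bm *m Bm = Dm.
Proof.
apply/matrixP => i j; rewrite !mxE.
case: (eqVneq i j) => [<-|ij].
  under eq_bigr do rewrite !mxE [pp _ i]pp_sym.
  rewrite mulr1n -sum_pp; apply: eq_bigr => k _.
  by case: (pp i k); rewrite ?mulr1 ?mulr0.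
rewrite mulr0n big1 // => k _; rewrite !mxE.
case h1: (pp i k); case h2: (pp k j); rewrite ?mulr0 ?mul0r //.
rewrite pp_sym in h1.
by move: ij; rewrite (pp_uniq h1 h2) eqxx.
Qed.

Lemma JM : Jm *m Mm = 0.
Proof. by rewrite /Mm mulmxBr JB subrr. Qed.

Lemma MJ : Mm *m Jm = 0.
Proof. by rewrite /Mm mulmxBl BJ subrr. Qed.

Lemma MM : Mm *m Mm = 2%:R *: Mm.
Proof.
rewrite /Mm mulmxBr !mulmxBl BB.
rewrite [Dm *m Dm]mul_diag_mx [Dm *m Bm]mul_diag_mx [Bm *m Dm]mul_mx_diag.
apply/matrixP => i j; rewrite !mxE.
rewrite cnt_B B_cnt mulrnAr cnt_sq.
move: ((cnt i)%:R *+ _) ((pp i j)%:R) => a b.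
by rewrite mulr_natl mulr2n opprB addrC.
Qed.

Lemma deg_card i :
  (#|[set k | complete_minus F i k]%SET| + (1 + cnt i))%N = N.
Proof.
have -> : [set k | complete_minus F i k]%SET = (~: (i |: [set k | pp i k]))%SET.
  apply/setP => k; rewrite !inE /complete_minus negb_or eq_sym.
  done.
have hS : #|(i |: [set k | pp i k])%SET| = (1 + cnt i)%N.
  by rewrite cardsU1 inE (negbTE (pp_irr i)).
by rewrite -hS addnC cardsC card_ord.
Qed.

Lemma lapE : laplacian R (complete_minus F) = N%:R *: 1%:M - Jm - Mm.
Proof.
apply/matrixP => i j; rewrite !mxE.
case: (eqVneq i j) => [<-|ij].
  rewrite mulr1n mulr1.
  have hd := congr1 (fun x => x%:R : C) (deg_card i).
  rewrite /= !natrD in hd; rewrite -hd.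
  rewrite /complete_minus eqxx /= (negbTE (pp_irr i)) mulr1n.
  by rewrite !subr0 addrA addrAC !addrK.
rewrite /complete_minus ij /= mulr0 mulr0n.
rewrite /pp; case: ([set i; j]%SET \in F) => /=.
  by rewrite [in RHS]subrr subrr.
by rewrite !subr0.
Qed.


Lemma col_final u v : pp u v ->
  (1%:M - Mm) *m basis_vec R u = basis_vec R v.
Proof.
move=> huv; rewrite /basis_vec -colE; apply/matrixP => i j; rewrite !mxE.
rewrite [j]ord1 eqxx andbT.
case: (eqVneq i u) => [->|iu].
  rewrite (cnt_pp huv) (negbTE (pp_irr u)) mulr1n.
  have -> : (u == v) = false by apply/negbTE/pp_neq.
  by rewrite subr0 subrr.
rewrite !mulr0n !sub0r opprK pp_sym.
case: (eqVneq i v) => [->|iv]; first by rewrite huv.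
by case h: (pp u i) => //; move: iv; rewrite (pp_uniq huv h) eqxx.
Qed.

Variable n : nat.
Hypothesis hN : N = (4 * n)%N.

Lemma main_col u v : pp u v ->
  UL (complete_minus F) (pi / 2 : R) *m basis_vec R u = basis_vec R v.
Proof.
move=> huv.
have N0 : (0 < N)%N := leq_ltn_trans (leq0n u) (ltn_ord u).
have NC : (N%:R : C) != 0 by rewrite pnatr_eq0 -lt0n.
have two0 : (2%:R : C) != 0 by rewrite pnatr_eq0.
set P0 := N%:R^-1 *: Jm; set P2 := 2%:R^-1 *: Mm; set P1 := 1 - (P0 + P2).
have hJJ : Jm * Jm = N%:R *: Jm := JJ.
have hJM : Jm * Mm = 0 := JM.
have hMJ : Mm * Jm = 0 := MJ.
have hMM : Mm * Mm = 2%:R *: Mm := MM.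
have h00 : P0 * P0 = P0 by rewrite /P0 sA hJJ scalerA -mulrA mulVf // mulr1.
have h02 : P0 * P2 = 0 by rewrite /P0 /P2 sA hJM scaler0.
have h20 : P2 * P0 = 0 by rewrite /P0 /P2 sA hMJ scaler0.
have h22 : P2 * P2 = P2 by rewrite /P2 sA hMM scalerA -mulrA mulVf // mulr1.
have h01 : P0 * P1 = 0 by rewrite mulrBr mulr1 mulrDr h00 h02 addr0 subrr.
have h21 : P2 * P1 = 0 by rewrite mulrBr mulr1 mulrDr h20 h22 add0r subrr.
have h10 : P1 * P0 = 0 by rewrite mulrBl mul1r mulrDl h00 h20 addr0 subrr.
have h12 : P1 * P2 = 0 by rewrite mulrBl mul1r mulrDl h02 h22 add0r subrr.
have h11 : P1 * P1 = P1 by rewrite {1}/P1 mulrBl mul1r mulrDl h01 h21 addr0 subr0.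
have hsum : P0 + P1 + P2 = 1 by rewrite /P1 addrAC addrC subrK.
have Lrep : laplacian R (complete_minus F) =
   (((0:R)%:C : R[i]) : C) *: P0 + (((N%:R : R)%:C : R[i]) : C) *: P1
   + (((N%:R - 2 : R)%:C : R[i]) : C) *: P2.
  rewrite lapE rmorph0 scale0r add0r rmorphB !rmorph_nat /P1 /P0 /P2.
  rewrite scalerBr scalerDr !scalerA (mulfV NC) scale1r mulrBl (mulfV two0).
  rewrite scalerBl scale1r.
  by apply/esym; rewrite opprD !addrA subrK.
have h2 : (2%:R^-1 + 2%:R^-1 : C) = 1.
  by rewrite -mulr2n -(mulr_natr (2%:R^-1)) (mulVf two0).
have hfin : P0 + P1 - P2 = 1%:M - Mm.
  rewrite /P1 opprD !addrA [P0 + 1]addrC addrK -addrA -opprD /P2 -scalerDl h2.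
  by rewrite scale1r.
clearbody P0 P1 P2.
rewrite /UL Lrep !scalerDr !scalerA.
rewrite (@expmx_decomp R N P0 P1 P2 h00 h01 h02 h10 h11 h12 h20 h21 h22 hsum
   _ _ _ _ _ _ (esum_lim _ _ _) (esum_lim _ _ _) (esum_lim _ _ _)).
have n0 : (0 < n)%N by move: N0; rewrite hN muln_gt0 => /andP[].
have e1 : (pi / 2 * N%:R : R) = pi *+ 2 *+ n by rewrite hN ang1.
have e2 : (pi / 2 * (N%:R - 2) : R) = pi *+ 2 *+ n.-1 + pi by rewrite hN ang2.
rewrite mulr0 cos0 sin0 e1 e2 cosDpi sinDpi !(trig_per R _).1 !(trig_per R _).2.
rewrite oppr0 !rmorph0 !mulr0 !subr0 rmorphN rmorph1 scaleN1r !scale1r.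
rewrite hfin.
exact: col_final.
Qed.

End Graph.

End Aux.

Theorem corollary2p5 (R : realType) (n : nat) :
  (forall u v : 'I_(4 * n), u != v ->
     lap_pst R (complete_minus [set [set u; v]]%SET) u v) /\
  (forall F : {set {set 'I_(4 * n)}},
     F != finset.set0 ->
     (forall e, e \in F -> #|e| = 2%N) ->
     (forall e e', e \in F -> e' \in F -> e != e' -> [disjoint e & e']) ->
     forall u v : 'I_(4 * n), u != v -> [set u; v]%SET \in F ->
       lap_pst_at (complete_minus F) u v (pi / 2 : R)).
Proof.
have P2 : forall F : {set {set 'I_(4 * n)}},
     (forall e, e \in F -> #|e| = 2%N) ->
     (forall e e', e \in F -> e' \in F -> e != e' -> [disjoint e & e']) ->
     forall u v : 'I_(4 * n), u != v -> [set u; v]%SET \in F ->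
       lap_pst_at (complete_minus F) u v (pi / 2 : R).
  move=> F Fcard Fdisj u v uv huv; split => //.
  exists 1; rewrite scale1r.
  exact: (@main_col R (4 * n)%N F Fcard Fdisj n erefl u v huv).
split; last by move=> F _; exact: P2.
move=> u v uv; exists (pi / 2); apply: P2 => //.
- by move=> e; rewrite inE => /eqP ->; rewrite cards2 uv.
- by move=> e e'; rewrite !inE => /eqP -> /eqP ->; rewrite eqxx.
- by rewrite inE.
Qed.
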